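(* Let $G$ be a unibased group and let $K$ be a field endowed with a non-trivial smooth $G$-action. Then $\mathrm{Sm}_K(G)$ is equivalent to each of its non-zero full subcategories closed under direct products and subquotients.
   Context: A permutation group is a Hausdorff topological group admitting a base of open sets consisting of left and right translates of subgroups. A permutation group $G$ is unibased if, for every open proper subgroup, the finite intersections of its conjugates form a base of open subgroups (neighbourhoods of $1$) of $G$. $\mathrm{Sm}_K(G)$ is the category of smooth left modules over the skew group ring $K\langle G\rangle$ ($(a[g])(b[h])=ab^g[gh]$), smooth meaning every element has an open stabilizer. The action on $K$ is smooth if stabilizers of elements of $K$ are open, and non-trivial if some element of $G$ acts non-trivially. *)

(* Defs.v *)
From HB Require Import structures.
From mathcomp Require Import all_boot all_algebra.
From mathcomp Require Import classical_sets boolp topology.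

Set Implicit Arguments.
Unset Strict Implicit.
Unset Printing Implicit Defensive.
Import GRing.Theory.
Local Open Scope classical_set_scope.
Local Open Scope ring_scope.

Record topGroup := TopGroup {
  tg_car :> topologicalType;
  tg_mul : tg_car -> tg_car -> tg_car;
  tg_inv : tg_car -> tg_car;
  tg_one : tg_car;
  tg_mulA : forall x y z, tg_mul x (tg_mul y z) = tg_mul (tg_mul x y) z;
  tg_mul1 : forall x, tg_mul tg_one x = x;
  tg_mul1r : forall x, tg_mul x tg_one = x;
  tg_mulV : forall x, tg_mul (tg_inv x) x = tg_one;
  tg_mulVr : forall x, tg_mul x (tg_inv x) = tg_one;
  tg_mul_cont : continuous (fun p : tg_car * tg_car => tg_mul p.1 p.2);
  tg_inv_cont : continuous tg_inv
}.

Section GroupDefs.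
Variable G : topGroup.
Local Notation one := (tg_one G).

Definition is_subgroup (H : set G) : Prop :=
  [/\ H one, (forall x y, H x -> H y -> H (tg_mul x y)) & (forall x, H x -> H (tg_inv x))].

Definition lcoset (g : G) (H : set G) : set G := [set tg_mul g h | h in H].
Definition rcoset (H : set G) (g : G) : set G := [set tg_mul h g | h in H].
Definition conjset (g : G) (H : set G) : set G := [set tg_mul (tg_mul g h) (tg_inv g) | h in H].

Definition is_open_base (B : set (set G)) : Prop :=
  (forall b, B b -> open b) /\
  (forall (U : set G) (x : G), open U -> U x -> exists b, [/\ B b, b x & b `<=` U]).

Definition permutation_group : Prop :=
  hausdorff_space G /\
  exists B : set (set G),
    is_open_base B /\
    (forall b, B b -> exists (H : set G) (g : G),
        is_subgroup H /\ (b = lcoset g H \/ b = rcoset H g)).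

Definition unibased : Prop :=
  forall H : set G, is_subgroup H -> open H -> H <> setT ->
  forall U : set G, nbhs one U ->
  exists (n : nat) (g : 'I_n -> G),
    [set x | forall i, conjset (g i) H x] `<=` U.

End GroupDefs.

Section Smooth.
Variables (G : topGroup) (K : fieldType) (actK : G -> K -> K).
Local Notation one := (tg_one G).

(* G acts on K by ring automorphisms, b |-> b^g, with (b^h)^g = b^(gh),
   as required for the skew group ring K<G>, (a[g])(b[h]) = a b^g [gh]. *)
Definition field_action : Prop :=
  [/\ forall g a b, actK g (a + b) = actK g a + actK g b,
      forall g a b, actK g (a * b)%R = (actK g a * actK g b)%R,
      forall g, actK g 1 = 1,
      forall a, actK one a = a &
      forall g h a, actK (tg_mul g h) a = actK g (actK h a)].

Definition smooth_field_action : Prop :=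
  forall a : K, open [set g : G | actK g a = a].

Definition nontrivial_field_action : Prop :=
  exists (g : G) (a : K), actK g a <> a.

(* A smooth left K<G>-module: a K-vector space M (action of the a[1])
   with an action of the [g] such that [g] (a m) = a^g ([g] m), and with
   open stabilisers. *)
Record smod := SMod {
  sm_car :> lmodType K;
  sm_act : G -> sm_car -> sm_car;
  sm_act_add : forall g (x y : sm_car), sm_act g (x + y) = sm_act g x + sm_act g y;
  sm_act_scale : forall g (a : K) (x : sm_car), sm_act g (a *: x) = actK g a *: sm_act g x;
  sm_act_one : forall x, sm_act one x = x;
  sm_act_mul : forall g h x, sm_act (tg_mul g h) x = sm_act g (sm_act h x);
  sm_smooth : forall x : sm_car, open [set g : G | sm_act g x = x]
}.

Definition is_shom (M N : smod) (f : M -> N) : Prop :=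
  (forall (a : K) (x y : M), f (a *: x + y) = a *: f x + f y) /\
  (forall g (x : M), f (sm_act g x) = sm_act g (f x)).

Definition shom (M N : smod) := {f : M -> N | is_shom f}.

Definition shom_fun (M N : smod) (f : shom M N) : M -> N := proj1_sig f.

Lemma is_shom_id (M : smod) : is_shom (@id M).
Proof. by split. Qed.

Lemma is_shom_comp (M N P : smod) (f : shom N P) (g : shom M N) :
  is_shom (shom_fun f \o shom_fun g).
Proof.
case: f => f [f1 f2]; case: g => g [g1 g2]; split => /=.
- by move=> a x y; rewrite g1 f1.
- by move=> h x; rewrite g2 f2.
Qed.

Definition sid (M : smod) : shom M M := exist _ _ (is_shom_id M).
Definition scomp (M N P : smod) (f : shom N P) (g : shom M N) : shom M P :=
  exist _ _ (is_shom_comp f g).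

Definition heq (M N : smod) (f g : shom M N) : Prop :=
  forall x, shom_fun f x = shom_fun g x.

Definition nonzero_smod (M : smod) : Prop := exists x : M, x <> 0.

Definition subquotient (N M : smod) : Prop :=
  exists (L : smod) (i : shom L M) (p : shom L N),
    injective (shom_fun i) /\ (forall y : N, exists x : L, shom_fun p x = y).

Definition closed_subquotients (P : smod -> Prop) : Prop :=
  forall M N : smod, P M -> subquotient N M -> P N.

Definition is_product (I : Type) (Ms : I -> smod) (X : smod)
  (proj : forall i, shom X (Ms i)) : Prop :=
  forall (Y : smod) (f : forall i, shom Y (Ms i)),
    exists u : shom Y X,
      (forall i, heq (scomp (proj i) u) (f i)) /\
      (forall v : shom Y X, (forall i, heq (scomp (proj i) v) (f i)) -> heq v u).

Definition closed_products (P : smod -> Prop) : Prop :=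
  forall (I : Type) (Ms : I -> smod) (X : smod) (proj : forall i, shom X (Ms i)),
    (forall i, P (Ms i)) -> is_product proj -> P X.

Definition subobj (P : smod -> Prop) := {M : smod | P M}.

Record sfunctor (P Q : smod -> Prop) := SFunctor {
  fobj : subobj P -> subobj Q;
  fmap : forall X Y : subobj P,
      shom (proj1_sig X) (proj1_sig Y) ->
      shom (proj1_sig (fobj X)) (proj1_sig (fobj Y));
  fmap_id : forall X, heq (fmap (sid (proj1_sig X))) (sid _);
  fmap_comp : forall X Y Z (f : shom (proj1_sig Y) (proj1_sig Z))
      (g : shom (proj1_sig X) (proj1_sig Y)),
      heq (fmap (scomp f g)) (scomp (fmap f) (fmap g))
}.

Definition sequiv (P Q : smod -> Prop) : Prop :=
  exists (F : sfunctor P Q) (H : sfunctor Q P)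
    (eta : forall X : subobj P, shom (proj1_sig X) (proj1_sig (fobj H (fobj F X))))
    (eta' : forall X : subobj P, shom (proj1_sig (fobj H (fobj F X))) (proj1_sig X))
    (eps : forall Y : subobj Q, shom (proj1_sig (fobj F (fobj H Y))) (proj1_sig Y))
    (eps' : forall Y : subobj Q, shom (proj1_sig Y) (proj1_sig (fobj F (fobj H Y)))),
    [/\ (forall X, heq (scomp (eta' X) (eta X)) (sid _) /\
                   heq (scomp (eta X) (eta' X)) (sid _)),
        (forall Y, heq (scomp (eps' Y) (eps Y)) (sid _) /\
                   heq (scomp (eps Y) (eps' Y)) (sid _)),
        (forall (X X' : subobj P) (f : shom (proj1_sig X) (proj1_sig X')),
            heq (scomp (fmap H (fmap F f)) (eta X)) (scomp (eta X') f)) &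
        (forall (Y Y' : subobj Q) (f : shom (proj1_sig Y) (proj1_sig Y')),
            heq (scomp f (eps Y)) (scomp (eps Y') (fmap F (fmap H f))))].

Definition all_smod : smod -> Prop := fun _ => True.

End Smooth.

(* Main.v *)
Require Import Defs.
From HB Require Import structures.
From mathcomp Require Import all_boot all_algebra.
From mathcomp Require Import classical_sets boolp functions topology.
Set Implicit Arguments.
Unset Strict Implicit.
Unset Printing Implicit Defensive.
Import GRing.Theory.
Local Open Scope classical_set_scope.
Local Open Scope ring_scope.

Section SubSmod.
Variables (G : topGroup) (K : fieldType) (actK : G -> K -> K).
Variables (W : lmodType K) (act : G -> W -> W).
Hypotheses (act_add : forall g x y, act g (x+y) = act g x + act g y)
  (act_scale : forall g a x, act g (a *: x) = actK g a *: act g x)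
  (act_one : forall x, act (tg_one G) x = x)
  (act_mul : forall g h x, act (tg_mul g h) x = act g (act h x)).
Variable S : W -> Prop.
Hypotheses (S0 : S 0) (SD : forall x y, S x -> S y -> S (x + y))
  (SZ : forall a x, S x -> S (a *: x)) (Sact : forall g x, S x -> S (act g x))
  (Ssm : forall x, S x -> open [set g : G | act g x = x]).

Definition ssT := {x : W | S x}.
HB.instance Definition _ := gen_eqMixin ssT.
HB.instance Definition _ := gen_choiceMixin ssT.
Lemma ss_eq (x y : ssT) : proj1_sig x = proj1_sig y -> x = y.
Proof. case: x y => x Hx [y Hy] /= E; subst y; congr exist; exact: Prop_irrelevance. Qed.
Definition ss0 : ssT := exist _ 0 S0.
Definition ssadd (x y : ssT) : ssT := exist _ (proj1_sig x + proj1_sig y) (SD (proj2_sig x) (proj2_sig y)).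
Lemma SN x : S x -> S (- x). Proof. by move=> h; rewrite -scaleN1r; apply: SZ. Qed.
Definition ssopp (x : ssT) : ssT := exist _ (- proj1_sig x) (SN (proj2_sig x)).
Definition ssscale (a : K) (x : ssT) : ssT := exist _ (a *: proj1_sig x) (SZ a (proj2_sig x)).
Lemma ss_addrA : associative ssadd. Proof. by move=> x y z; apply: ss_eq; rewrite /= addrA. Qed.
Lemma ss_addrC : commutative ssadd. Proof. by move=> x y; apply: ss_eq; rewrite /= addrC. Qed.
Lemma ss_add0r : left_id ss0 ssadd. Proof. by move=> x; apply: ss_eq; rewrite /= add0r. Qed.
Lemma ss_addNr : left_inverse ss0 ssopp ssadd. Proof. by move=> x; apply: ss_eq; rewrite /= addNr. Qed.
HB.instance Definition _ := GRing.isZmodule.Build ssT ss_addrA ss_addrC ss_add0r ss_addNr.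
Lemma ss_scalerA a b v : ssscale a (ssscale b v) = ssscale (a * b) v.
Proof. by apply: ss_eq; rewrite /= scalerA. Qed.
Lemma ss_scale1r : left_id 1 ssscale. Proof. by move=> x; apply: ss_eq; rewrite /= scale1r. Qed.
Lemma ss_scalerDr : right_distributive ssscale +%R.
Proof. by move=> a x y; apply: ss_eq; rewrite /= scalerDr. Qed.
Lemma ss_scalerDl v : {morph ssscale^~ v: a b / a + b}.
Proof. by move=> a b; apply: ss_eq; rewrite /= scalerDl. Qed.
HB.instance Definition _ := GRing.Zmodule_isLmodule.Build K ssT ss_scalerA ss_scale1r ss_scalerDr ss_scalerDl.

Definition ssact (g : G) (x : ssT) : ssT := exist _ (act g (proj1_sig x)) (Sact g (proj2_sig x)).
Lemma ssact_add g (x y : ssT) : ssact g (x + y) = ssact g x + ssact g y.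
Proof. by apply: ss_eq; rewrite /= act_add. Qed.
Lemma ssact_scale g (a : K) (x : ssT) : ssact g (a *: x) = actK g a *: ssact g x.
Proof. by apply: ss_eq; rewrite /= act_scale. Qed.
Lemma ssact_one x : ssact (tg_one G) x = x.
Proof. by apply: ss_eq; rewrite /= act_one. Qed.
Lemma ssact_mul g h x : ssact (tg_mul g h) x = ssact g (ssact h x).
Proof. by apply: ss_eq; rewrite /= act_mul. Qed.
Lemma ssact_smooth (x : ssT) : open [set g : G | ssact g x = x].
Proof.
have -> : [set g : G | ssact g x = x] = [set g : G | act g (proj1_sig x) = proj1_sig x].
  rewrite funeqE => g; apply/propext; split => [E|E]; [by move: E => /(congr1 (@proj1_sig _ _)) | exact: ss_eq].
exact: Ssm (proj2_sig x).
Qed.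
Definition ss_smod : smod actK := SMod ssact_add ssact_scale ssact_one ssact_mul ssact_smooth.
End SubSmod.

Lemma class_sum0 (T : Type) (W : zmodType) (R : T -> T -> Prop) (u : T -> W)
  (Rr : forall x, R x x) (Rs : forall x y, R x y -> R y x)
  (Rt : forall x y z, R x y -> R y z -> R x z) :
  forall s : seq T, (forall y, \sum_(p <- s | `[< R p y >]) u p = 0) ->
  \sum_(p <- s) u p = 0.
Proof.
move=> s; have [n] := ubnP (size s); elim: n s => // n IH [|q s] /= Hn Hs.
  by rewrite big_nil.
rewrite (bigID (fun p => `[< R p q >])) /= (Hs q) add0r.
rewrite big_cons.
have -> : `[< R q q >] = true by apply/asboolP.
rewrite /= -(big_filter _ (fun p => ~~ `[< R p q >])); apply: IH.
  by rewrite size_filter (leq_ltn_trans (count_size _ _)).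
move=> y; rewrite big_filter_cond.
case: (pselect (R q y)) => Hqy.
  rewrite big1 // => p /andP[/asboolP Hpq /asboolP Hpy].
  by case: Hpq; apply: Rt Hpy (Rs _ _ Hqy).
have := Hs y; rewrite big_cons.
have -> : `[< R q y >] = false by apply/asboolP.
rewrite /= => E; rewrite -[RHS]E; apply: eq_bigl => p.
case: (pselect (R p y)) => Hpy.
  have -> : `[< R p y >] = true by apply/asboolP.
  rewrite andbT; apply/asboolP => Hpq; apply: Hqy; exact: Rt (Rs _ _ Hpq) Hpy.
have -> : `[< R p y >] = false by apply/asboolP.
by rewrite andbF.
Qed.

Section Ded.
Variables (G : topGroup) (K : fieldType) (actK : G -> K -> K).
Hypothesis FA : field_action actK.

Definition eqF (F : set K) (g h : G) := forall c, F c -> actK g c = actK h c.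

Lemma eqF_refl F g : eqF F g g. Proof. by []. Qed.
Lemma eqF_sym F g h : eqF F g h -> eqF F h g. Proof. by move=> E c Fc; rewrite E. Qed.
Lemma eqF_trans F g h k : eqF F g h -> eqF F h k -> eqF F g k.
Proof. by move=> E1 E2 c Fc; rewrite E1 ?E2. Qed.

Lemma asb_true (P : Prop) : P -> `[< P >] = true. Proof. by move=> h; apply/asboolP. Qed.
Lemma asb_false (P : Prop) : ~ P -> `[< P >] = false. Proof. by move=> h; apply/asboolP. Qed.

Lemma dedekind (W : lmodType K) (F : set K) (F1 : F 1)
  (FM : forall c d, F c -> F d -> F (c * d)) :
  forall s : seq (G * W), (forall c, F c -> \sum_(p <- s) actK p.1 c *: p.2 = 0) ->
  forall y : G, \sum_(p <- s | `[< eqF F p.1 y >]) p.2 = 0.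
Proof.
case: FA => aD aM a1 aone amul.
move=> s; have [n] := ubnP (size s); elim: n s => // n IH [|p0 s] /= Hn Hs.
  by move=> y; rewrite big_nil.
pose B := [seq p <- s | ~~ `[< eqF F p.1 p0.1 >]].
have sB : (size B < n)%N by rewrite size_filter (leq_ltn_trans (count_size _ _)).
have step1 : forall d, F d -> forall y,
    (actK y d - actK p0.1 d) *: \sum_(p <- B | `[< eqF F p.1 y >]) p.2 = 0.
  move=> d Fd y.
  pose Bd := [seq (p.1, (actK p.1 d - actK p0.1 d) *: p.2) | p <- B].
  have := IH Bd; rewrite size_map => /(_ sB).
  have hyp : forall c, F c -> \sum_(p <- Bd) actK p.1 c *: p.2 = 0.
    move=> c Fc; rewrite big_map /=.
    have E1 := Hs _ (FM _ _ Fd Fc); have E2 := Hs _ Fc.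
    have : \sum_(p <- p0 :: s) actK p.1 (d * c) *: p.2 -
           actK p0.1 d *: \sum_(p <- p0 :: s) actK p.1 c *: p.2 = 0.
      by rewrite E1 E2 scaler0 subr0.
    rewrite scaler_sumr -sumrB.
    have EE : forall p : G * W, actK p.1 (d * c) *: p.2 - actK p0.1 d *: (actK p.1 c *: p.2)
       = actK p.1 c *: ((actK p.1 d - actK p0.1 d) *: p.2).
      by move=> p; rewrite aM !scalerA -scalerBl mulrBr [actK p.1 c * _]mulrC [actK p0.1 d * _]mulrC.
    rewrite (eq_bigr _ (fun p _ => EE p)).
    rewrite big_cons subrr scale0r !scaler0 add0r.
    rewrite (bigID (fun p => `[< eqF F p.1 p0.1 >])) /= big1 ?add0r.
      by rewrite big_filter.
    by move=> p /asboolP E; rewrite (E d Fd) subrr scale0r scaler0.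
  move=> /(_ hyp y); rewrite big_map /= scaler_sumr => E; rewrite -[RHS]E.
  apply: eq_bigr => p /asboolP Ep; by rewrite Ep.
have step2 : forall y, \sum_(p <- B | `[< eqF F p.1 y >]) p.2 = 0.
  move=> y; case: (pselect (eqF F y p0.1)) => Hy.
    rewrite big_filter_cond big1 // => p /andP [/asboolP H1 /asboolP H2].
    by case: H1; apply: eqF_trans H2 Hy.
  have [d Hd] : exists d, ~ (F d -> actK y d = actK p0.1 d).
    by apply/existsNP => H; apply: Hy.
  have Fd : F d by apply: contrapT => nF; apply: Hd => /nF.
  have Hd' : actK y d <> actK p0.1 d by move=> E; apply: Hd => _.
  have := step1 d Fd y => /eqP; rewrite scaler_eq0 subr_eq0 => /orP [/eqP //|/eqP //].
have step3 : \sum_(p <- B) p.2 = 0.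
  apply: (@class_sum0 _ _ (fun p q => eqF F p.1 q.1) snd).
  - by move=> x; apply: eqF_refl.
  - by move=> x y; apply: eqF_sym.
  - by move=> x y z; apply: eqF_trans.
  by move=> q; apply: step2.
move=> y; case: (pselect (eqF F p0.1 y)) => Hy.
  have E := Hs 1 F1.
  have E' : \sum_(p <- p0 :: s) p.2 = 0.
    by rewrite -[RHS]E; apply: eq_bigr => p _; rewrite a1 scale1r.
  move: E'; rewrite (bigID (fun p => `[< eqF F p.1 p0.1 >])) /=.
  have EB : \sum_(i <- p0 :: s | ~~ `[< eqF F i.1 p0.1 >]) i.2 = \sum_(p <- B) p.2.
    by rewrite big_cons asb_true //= big_filter.
  rewrite EB step3 addr0.
  move=> E2; rewrite -[RHS]E2; apply: eq_bigl => p.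
  case: (pselect (eqF F p.1 y)) => H.
    by rewrite (asb_true H) (asb_true (eqF_trans H (eqF_sym Hy))).
  rewrite (asb_false H) asb_false // => H'; apply: H; exact: eqF_trans H' Hy.
rewrite big_cons asb_false //= -[RHS](step2 y) big_filter_cond.
apply: eq_bigl => p.
case: (pselect (eqF F p.1 y)) => H.
  rewrite (asb_true H) andbT; apply/esym/negP => /asboolP H'; apply: Hy.
  exact: eqF_trans (eqF_sym H') H.
by rewrite (asb_false H) andbF.
Qed.
End Ded.

Section Grp.
Variable G : topGroup.
Local Notation mul := (@tg_mul G).
Local Notation inv := (@tg_inv G).
Local Notation one := (tg_one G).

Lemma mulKg (g x : G) : mul (inv g) (mul g x) = x.
Proof. by rewrite tg_mulA tg_mulV tg_mul1. Qed.
Lemma mulKVg (g x : G) : mul g (mul (inv g) x) = x.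
Proof. by rewrite tg_mulA tg_mulVr tg_mul1. Qed.

Lemma lmul_cont (a : G) : continuous (fun y : G => mul a y).
Proof.
move=> y.
apply: (@continuous2_cvg _ _ _ _ _ _ (fun _ => a) id (@tg_mul G) a y).
- exact: (@tg_mul_cont G (a, y)).
- exact: cvg_cst.
- exact: cvg_id.
Qed.

Lemma open_ltrans (a : G) (O : set G) : open O -> open [set y | O (mul a y)].
Proof. by move=> oO; exact: (proj1 (continuousP _) (@lmul_cont a) O oO). Qed.

Lemma sub_open (H O : set G) : (forall x y, H x -> H y -> H (mul x y)) ->
  open O -> O one -> O `<=` H -> open H.
Proof.
move=> Hm oO O1 OH.
have -> : H = \bigcup_(h in H) [set y | O (mul (inv h) y)].
  rewrite funeqE => y; apply/propext; split.
    by move=> Hy; exists y => //=; rewrite tg_mulV.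
  by move=> [h Hh /= Oy]; rewrite -(mulKVg h y); apply: Hm => //; apply: OH.
by apply: bigcup_open => h _; apply: open_ltrans.
Qed.
End Grp.

Section Fix.
Variables (G : topGroup) (K : fieldType) (actK : G -> K -> K).
Hypotheses (FA : field_action actK) (SM : smooth_field_action actK)
  (NT : nontrivial_field_action actK) (UB : unibased G).
Local Notation mul := (@tg_mul G).
Local Notation inv := (@tg_inv G).
Local Notation one := (tg_one G).

Definition Fix (bs : seq K) := [set g : G | forall b, b \in bs -> actK g b = b].

Lemma Fix1 bs : Fix bs one.
Proof. by case: FA => _ _ _ a1 _ b _; rewrite a1. Qed.

Lemma open_Fix bs : open (Fix bs).
Proof.
elim: bs => [|b bs IH].
  have -> : Fix [::] = setT by rewrite funeqE => g; apply/propext; split.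
  exact: openT.
have -> : Fix (b :: bs) = [set g | actK g b = b] `&` Fix bs.
  rewrite funeqE => g; apply/propext; split.
    by move=> H; split; [apply: H; rewrite inE eqxx | move=> c cb; apply: H; rewrite inE cb orbT].
  by move=> [H1 H2] c; rewrite inE => /orP [/eqP -> //| /H2].
by apply: openI => //; apply: SM.
Qed.

Lemma actKV g a : actK (inv g) (actK g a) = a.
Proof. by case: FA => _ _ _ a1 am; rewrite -am tg_mulV a1. Qed.
Lemma actKVr g a : actK g (actK (inv g) a) = a.
Proof. by case: FA => _ _ _ a1 am; rewrite -am tg_mulVr a1. Qed.

Lemma small (U : set G) : nbhs one U -> exists bs, Fix bs `<=` U.
Proof.
case: FA => aD aM a1 aone amul.
move=> nU; case: NT => g0 [a Ha].
pose H := [set g : G | actK g a = a].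
have sH : is_subgroup H.
  split; rewrite /H /=; first by rewrite aone.
    by move=> x y Hx Hy; rewrite amul Hy Hx.
  by move=> x Hx; rewrite -{1}Hx actKV.
have oH : open H by apply: SM.
have nH : H <> setT by move=> E; apply: Ha; have : setT g0 by [] ; rewrite -E.
have [n [g Hg]] := UB sH oH nH nU.
exists [seq actK (g i) a | i <- enum 'I_n] => x Hx; apply: Hg => i.
exists (mul (mul (inv (g i)) x) (g i)).
  rewrite /H /= !amul.
  have := Hx (actK (g i) a); rewrite map_f ?mem_enum // => /(_ isT) ->.
  by rewrite actKV.
by rewrite -!tg_mulA tg_mulVr tg_mul1r !tg_mulA tg_mulVr tg_mul1.
Qed.

Lemma open_of_Fix (S : set G) bs : (forall x y, S x -> S y -> S (mul x y)) ->
  Fix bs `<=` S -> open S.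
Proof. move=> Sm FS; apply: (sub_open Sm _ _ FS); [exact: open_Fix | exact: Fix1]. Qed.

End Fix.

Section SmLemmas.
Variables (G : topGroup) (K : fieldType) (actK : G -> K -> K).
Lemma sm_act0 (M : smod actK) g : sm_act g (0 : M) = 0.
Proof.
have E := sm_act_add g (0 : M) 0; rewrite addr0 in E.
by rewrite -[RHS](subrr (sm_act g (0:M))) {2}E addrK.
Qed.
Lemma sm_act_sum (M : smod actK) g (T : Type) (s : seq T) (F : T -> M) :
  sm_act g (\sum_(t <- s) F t) = \sum_(t <- s) sm_act g (F t).
Proof.
elim: s => [|t s IH]; first by rewrite !big_nil sm_act0.
by rewrite !big_cons sm_act_add IH.
Qed.
Lemma sm_actKV (M : smod actK) g (x : M) : sm_act (tg_inv g) (sm_act g x) = x.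
Proof. by rewrite -sm_act_mul tg_mulV sm_act_one. Qed.
End SmLemmas.

Section Prod.
Variables (G : topGroup) (K : fieldType) (actK : G -> K -> K).
Hypotheses (FA : field_action actK) (SM : smooth_field_action actK)
  (NT : nontrivial_field_action actK) (UB : unibased G).
Local Notation mul := (@tg_mul G).
Local Notation inv := (@tg_inv G).
Local Notation one := (tg_one G).
Variables (I : Type) (M : smod actK).

Definition WX := I -> M.
Definition actX (g : G) (f : WX) : WX := fun i => sm_act g (f i).
Lemma actX_add g (x y : WX) : actX g (x + y) = actX g x + actX g y.
Proof. by rewrite funeqE => i; rewrite /actX /= sm_act_add. Qed.
Lemma actX_scale g a (x : WX) : actX g (a *: x) = actK g a *: actX g x.
Proof. by rewrite funeqE => i; rewrite /actX /= sm_act_scale. Qed.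
Lemma actX_one (x : WX) : actX one x = x.
Proof. by rewrite funeqE => i; rewrite /actX /= sm_act_one. Qed.
Lemma actX_mul g h (x : WX) : actX (mul g h) x = actX g (actX h x).
Proof. by rewrite funeqE => i; rewrite /actX /= sm_act_mul. Qed.

Lemma WX_add (x y : WX) i : (x + y) i = x i + y i. Proof. by []. Qed.
Lemma WX_scale a (x : WX) i : (a *: x) i = a *: x i. Proof. by []. Qed.

Definition SX (f : WX) := exists bs, Fix actK bs `<=` [set g | actX g f = f].

Lemma Fix_cat bs1 bs2 y : Fix actK (bs1 ++ bs2) y -> Fix actK bs1 y /\ Fix actK bs2 y.
Proof. by move=> H; split => b hb; apply: H; rewrite mem_cat hb ?orbT. Qed.

Lemma Fix_conj g bs y : Fix actK (map (actK g) bs) y -> Fix actK bs (mul (mul (inv g) y) g).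
Proof.
case: FA => _ _ _ _ am.
move=> H b hb; rewrite !am H ?map_f // actKV //.
Qed.

Lemma conj_eq g y : mul y g = mul g (mul (mul (inv g) y) g).
Proof. by rewrite !tg_mulA tg_mulVr tg_mul1. Qed.

Lemma SX0 : SX 0.
Proof. by exists [::] => g _; rewrite /= funeqE => i; exact: sm_act0. Qed.
Lemma SXD x y : SX x -> SX y -> SX (x + y).
Proof.
move=> [b1 H1] [b2 H2]; exists (b1 ++ b2) => g /Fix_cat [h1 h2] /=.
by rewrite actX_add (H1 _ h1) (H2 _ h2).
Qed.
Lemma SXZ a x : SX x -> SX (a *: x).
Proof.
move=> [b H]; exists (a :: b) => g Hg /=; rewrite actX_scale Hg ?inE ?eqxx //.
by rewrite H // => c hc; apply: Hg; rewrite inE hc orbT.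
Qed.
Lemma SXact g x : SX x -> SX (actX g x).
Proof.
move=> [b H]; exists (map (actK g) b) => y /Fix_conj Hy /=.
by rewrite -actX_mul conj_eq actX_mul (H _ Hy).
Qed.
Lemma SXsm x : SX x -> open [set g | actX g x = x].
Proof.
move=> [b H]; apply: (@open_of_Fix _ _ _ FA SM _ b) => // g h /= E1 E2.
by rewrite actX_mul E2 E1.
Qed.

Definition Xmod : smod actK :=
  @ss_smod G K actK WX actX actX_add actX_scale actX_one actX_mul SX SX0 SXD SXZ SXact SXsm.

Lemma Xmod_add (x y : Xmod) : proj1_sig (x + y) = proj1_sig x + proj1_sig y.
Proof. by []. Qed.
Lemma Xmod_scale a (x : Xmod) : proj1_sig (a *: x) = a *: proj1_sig x.
Proof. by []. Qed.
Lemma Xmod_act g (x : Xmod) : proj1_sig (sm_act g x) = actX g (proj1_sig x).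
Proof. by []. Qed.

Definition Xproj_fun (i : I) (x : Xmod) : M := proj1_sig x i.
Lemma Xproj_is_shom i : is_shom (Xproj_fun i).
Proof. by split. Qed.
Definition Xproj i : shom Xmod M := exist _ _ (Xproj_is_shom i).

Lemma Xmod_is_product : @is_product G K actK I (fun _ : I => M) Xmod Xproj.
Proof.
move=> Y f.
pose uf (y : Y) : WX := fun i => shom_fun (f i) y.
have Su : forall y, SX (uf y).
  move=> y; have [] := @small _ _ _ FA SM NT UB [set g | sm_act g y = y].
    apply: open_nbhs_nbhs; split; first exact: sm_smooth.
    by rewrite /= sm_act_one.
  move=> b Hb; exists b => g /Hb /= E; rewrite funeqE => i.
  by have [h1 h2] := proj2_sig (f i); rewrite /actX /uf /shom_fun -h2 E.
pose u (y : Y) : Xmod := exist _ (uf y) (Su y).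
have hu : is_shom u.
  split.
    move=> a x y; apply: ss_eq; rewrite /= funeqE => i.
    by have [h1 h2] := proj2_sig (f i); rewrite /uf WX_add WX_scale /shom_fun h1.
  move=> g x; apply: ss_eq; rewrite /= funeqE => i.
  by have [h1 h2] := proj2_sig (f i); rewrite /uf /actX /shom_fun h2.
exists (exist _ u hu); split; first by [].
move=> v Hv y; apply: ss_eq; rewrite /= funeqE => i.
exact: Hv i y.
Qed.
End Prod.

Section Main.
Variables (G : topGroup) (K : fieldType) (actK : G -> K -> K).
Hypotheses (FA : field_action actK) (SM : smooth_field_action actK)
  (NT : nontrivial_field_action actK) (UB : unibased G).
Local Notation mul := (@tg_mul G).
Local Notation inv := (@tg_inv G).
Local Notation one := (tg_one G).
Variables (M : smod actK) (m : M) (m0 : m <> 0) (V : smod actK).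

Lemma ex_bs (v : V) : exists bs, Fix actK bs `<=` [set g | sm_act g v = v /\ sm_act g m = m].
Proof.
apply: (small FA SM NT UB); apply: open_nbhs_nbhs; split.
  by apply: openI; apply: sm_smooth.
by split; apply: sm_act_one.
Qed.
Definition bs_of (v : V) : seq K := projT1 (cid (ex_bs v)).
Lemma bs_ofP v : Fix actK (bs_of v) `<=` [set g | sm_act g v = v /\ sm_act g m = m].
Proof. exact: (projT2 (cid (ex_bs v))). Qed.

Definition Fld (v : V) : set K := [set c | forall g, Fix actK (bs_of v) g -> actK g c = c].
Lemma Fld1 v : Fld v 1. Proof. by case: FA => _ _ a1 _ _ g _; rewrite a1. Qed.
Lemma FldM v c d : Fld v c -> Fld v d -> Fld v (c * d).
Proof. by case: FA => _ aM _ _ _ Hc Hd g Hg; rewrite aM Hc ?Hd. Qed.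

Lemma eqF_Fix w h h0 : eqF actK (Fld w) h h0 -> Fix actK (bs_of w) (mul (inv h0) h).
Proof.
case: FA => _ _ _ _ am.
move=> E b hb; rewrite am E ?actKV // => g Hg; exact: Hg.
Qed.

Lemma eqF_act w h h0 : eqF actK (Fld w) h h0 -> sm_act h m = sm_act h0 m /\ sm_act h w = sm_act h0 w.
Proof.
move=> /eqF_Fix /bs_ofP [E1 E2].
by split; rewrite -(mulKVg h0 h) sm_act_mul ?E1 ?E2.
Qed.

Definition I := (V * K)%type.
Definition X := Xmod FA SM I M.
Definition Form := seq (K * V * G).

Definition term (t : K * V * G) (i : I) : M :=
  if `[< t.1.2 = i.1 /\ Fld i.1 i.2 >] then (t.1.1 * actK t.2 i.2) *: sm_act t.2 m else 0.
Definition alpha_fun (f : Form) : WX I M := fun i => \sum_(t <- f) term t i.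
Definition beta (f : Form) : V := \sum_(t <- f) t.1.1 *: sm_act t.2 t.1.2.

Definition scaleF (a : K) (f : Form) : Form := [seq (a * t.1.1, t.1.2, t.2) | t <- f].
Definition actF (g : G) (f : Form) : Form := [seq (actK g t.1.1, t.1.2, mul g t.2) | t <- f].

Lemma alpha_fun_nil : alpha_fun [::] = 0.
Proof. by rewrite funeqE => i; rewrite /alpha_fun big_nil. Qed.
Lemma alpha_fun_cat f1 f2 : alpha_fun (f1 ++ f2) = alpha_fun f1 + alpha_fun f2.
Proof. by rewrite funeqE => i; rewrite /alpha_fun big_cat. Qed.
Lemma alpha_fun_scale a f : alpha_fun (scaleF a f) = a *: alpha_fun f.
Proof.
rewrite funeqE => i; rewrite WX_scale /alpha_fun big_map scaler_sumr; apply: eq_bigr => t _.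
by rewrite /term /=; case: ifP => _; rewrite ?scaler0 // scalerA mulrA.
Qed.
Lemma alpha_fun_act g f : alpha_fun (actF g f) = actX g (alpha_fun f).
Proof.
case: FA => _ aM _ _ am.
rewrite funeqE => i; rewrite /actX /alpha_fun big_map sm_act_sum; apply: eq_bigr => t _.
rewrite /term /=; case: ifP => _; last by rewrite sm_act0.
by rewrite sm_act_scale aM am sm_act_mul.
Qed.

Lemma beta_nil : beta [::] = 0. Proof. by rewrite /beta big_nil. Qed.
Lemma beta_cat f1 f2 : beta (f1 ++ f2) = beta f1 + beta f2.
Proof. by rewrite /beta big_cat. Qed.
Lemma beta_scale a f : beta (scaleF a f) = a *: beta f.
Proof. by rewrite /beta big_map scaler_sumr; apply: eq_bigr => t _; rewrite /= scalerA. Qed.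
Lemma beta_act g f : beta (actF g f) = sm_act g (beta f).
Proof.
rewrite /beta big_map sm_act_sum; apply: eq_bigr => t _.
by rewrite /= sm_act_scale sm_act_mul.
Qed.

Lemma alpha_S f : @SX G K actK I M (alpha_fun f).
Proof.
case: FA => _ aM _ _ am.
exists (flatten [seq t.1.1 :: map (actK t.2) (bs_of t.1.2) | t <- f]) => y /= Hy.
rewrite funeqE => i; rewrite /actX /alpha_fun sm_act_sum.
elim: f Hy => [|t f IH] /= Hy; first by rewrite !big_nil.
have [H1 H2] := Fix_cat (bs1 := t.1.1 :: map (actK t.2) (bs_of t.1.2)) Hy.
rewrite !big_cons IH //; congr (_ + _).
rewrite /term; case: ifP => Hg; last by rewrite sm_act0.
move/asboolP: Hg => [Ev Fc].
have Hya : actK y t.1.1 = t.1.1 by apply: H1; rewrite inE eqxx.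
have Hz : Fix actK (bs_of t.1.2) (mul (mul (inv t.2) y) t.2).
  by apply: (Fix_conj FA) => b hb; apply: H1; rewrite inE hb orbT.
have [_ Em] := bs_ofP Hz.
rewrite sm_act_scale aM Hya -am -sm_act_mul (conj_eq t.2 y) am sm_act_mul Em.
by rewrite -Ev in Fc; rewrite (Fc _ Hz).
Qed.

Definition alpha (f : Form) : X := exist _ (alpha_fun f) (alpha_S f).

Lemma key f : alpha_fun f = 0 -> beta f = 0.
Proof.
move=> A.
pose R (t t' : K * V * G) := t.1.2 = t'.1.2 /\ eqF actK (Fld t.1.2) t.2 t'.2.
apply: (@class_sum0 _ _ R (fun t => t.1.1 *: sm_act t.2 t.1.2)).
- by move=> t; split.
- by move=> t t' [E1 E2]; split => //; rewrite -E1; apply: eqF_sym.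
- move=> t t' t'' [E1 E2] [E3 E4]; split; first by rewrite E1.
  by apply: eqF_trans E2 _; rewrite E1.
move=> [[a0 w] h0] /=.
pose s := [seq (t.2, t.1.1 *: sm_act t.2 m) | t <- f & t.1.2 == w].
have D := @dedekind _ _ _ FA _ (Fld w) (@Fld1 w) (@FldM w) s.
have := D _ h0; rewrite big_map big_filter_cond /=.
have hyp : forall c, Fld w c -> \sum_(p <- s) actK p.1 c *: p.2 = 0.
  move=> c Fc; have := congr1 (fun F => F (w, c)) A; rewrite /alpha_fun /= => E.
  rewrite -[RHS]E big_map big_filter big_mkcond /=; apply: eq_bigr => t _.
  rewrite /term /=; case: eqP => Ev.
    by rewrite asb_true // scalerA mulrC.
  by rewrite asb_false // => -[].
move=> /(_ hyp) E.
have E' : (\sum_(t <- f | (t.1.2 == w) && `[< eqF actK (Fld w) t.2 h0 >]) t.1.1) *: sm_act h0 m = 0.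
  rewrite -[RHS]E scaler_suml; apply: eq_bigr => t /andP [_ /asboolP Et].
  by have [-> _] := eqF_act Et.
have Es : \sum_(t <- f | (t.1.2 == w) && `[< eqF actK (Fld w) t.2 h0 >]) t.1.1 = 0.
  move/eqP: E'; rewrite scaler_eq0 => /orP [/eqP //|/eqP Hm].
  by exfalso; apply: m0; rewrite -(sm_actKV h0 m) Hm sm_act0.
rewrite (eq_bigl (fun t => (t.1.2 == w) && `[< eqF actK (Fld w) t.2 h0 >])).
  rewrite (eq_bigr (fun t => t.1.1 *: sm_act h0 w)).
    by rewrite -scaler_suml Es scale0r.
  move=> t /andP [/eqP Ev /asboolP Et]; rewrite Ev.
  by have [_ ->] := eqF_act Et.
move=> t /=; rewrite /R /=.
case: (t.1.2 =P w) => Ev /=.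
  by rewrite Ev; apply/asboolP/asboolP => [[]|] //.
by apply/asboolP => -[].
Qed.


Lemma alpha_eq f1 f2 : alpha_fun f1 = alpha_fun f2 -> alpha f1 = alpha f2.
Proof. by move=> E; apply: ss_eq. Qed.

Definition WL := (sm_car X * sm_car V)%type.
Definition actL (g : G) (p : WL) : WL := (sm_act g p.1, sm_act g p.2).
Lemma actL_add g (x y : WL) : actL g (x + y) = actL g x + actL g y.
Proof.
rewrite /actL (_ : (x + y).1 = x.1 + y.1) // (_ : (x + y).2 = x.2 + y.2) //.
by rewrite !sm_act_add.
Qed.
Lemma actL_scale g a (x : WL) : actL g (a *: x) = actK g a *: actL g x.
Proof.
rewrite /actL (_ : (a *: x).1 = a *: x.1) // (_ : (a *: x).2 = a *: x.2) //.
by rewrite !sm_act_scale.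
Qed.
Lemma actL_one (x : WL) : actL one x = x.
Proof. by case: x => x y; rewrite /actL !sm_act_one. Qed.
Lemma actL_mul g h (x : WL) : actL (mul g h) x = actL g (actL h x).
Proof. by rewrite /actL !sm_act_mul. Qed.

Definition SL (p : WL) := exists f, p = (alpha f, beta f).
Lemma SL0 : SL 0.
Proof.
exists [::]; rewrite beta_nil; congr pair; apply: ss_eq; by rewrite /= alpha_fun_nil.
Qed.
Lemma SLD x y : SL x -> SL y -> SL (x + y).
Proof.
move=> [f1 ->] [f2 ->]; exists (f1 ++ f2); rewrite beta_cat; congr pair.
by apply: ss_eq; rewrite /= alpha_fun_cat.
Qed.
Lemma SLZ a x : SL x -> SL (a *: x).
Proof.
move=> [f ->]; exists (scaleF a f); rewrite beta_scale; congr pair.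
by apply: ss_eq; rewrite /= alpha_fun_scale.
Qed.
Lemma SLact g x : SL x -> SL (actL g x).
Proof.
move=> [f ->]; exists (actF g f); rewrite /actL /= beta_act; congr pair.
by apply: ss_eq; rewrite /= alpha_fun_act.
Qed.
Lemma SLsm x : SL x -> open [set g | actL g x = x].
Proof.
move=> _; have -> : [set g | actL g x = x] =
   [set g | sm_act g x.1 = x.1] `&` [set g | sm_act g x.2 = x.2].
  rewrite funeqE => g; apply/propext; case: x => x1 x2; rewrite /actL /=; split.
    by move=> [-> ->].
  by move=> [-> ->].
by apply: openI; apply: sm_smooth.
Qed.

Definition Lmod : smod actK :=
  @ss_smod G K actK WL actL actL_add actL_scale actL_one actL_mul SL SL0 SLD SLZ SLact SLsm.

Definition iL_fun (x : Lmod) : X := (proj1_sig x).1.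
Definition pL_fun (x : Lmod) : V := (proj1_sig x).2.
Lemma iL_shom : is_shom iL_fun. Proof. by split. Qed.
Lemma pL_shom : is_shom pL_fun. Proof. by split. Qed.

Lemma V_subquotient : subquotient V X.
Proof.
exists Lmod, (exist _ _ iL_shom), (exist _ _ pL_shom); split.
  move=> [x Hx] [y Hy]; rewrite /iL_fun /= => E; apply: ss_eq => /=.
  case: Hx => f1 Ex; case: Hy => f2 Ey; subst x y; move: E => /= E.
  have Ea : alpha_fun (f1 ++ scaleF (-1) f2) = 0.
    by rewrite alpha_fun_cat alpha_fun_scale -[alpha_fun f2]/(proj1_sig (alpha f2)) -E /= scaleN1r subrr.
  have := key Ea; rewrite beta_cat beta_scale scaleN1r => /eqP; rewrite subr_eq0 => /eqP ->.
  by rewrite E.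
move=> y; have Sy : SL (alpha [:: (1, y, one)], beta [:: (1, y, one)]) by exists [:: (1, y, one)].
exists (exist _ _ Sy); rewrite /pL_fun /= /beta big_cons big_nil addr0 scale1r.
exact: sm_act_one.
Qed.

End Main.

Theorem proposition3p3 (G : topGroup) (K : fieldType) (actK : G -> K -> K) :
  permutation_group G -> unibased G ->
  field_action actK -> smooth_field_action actK -> nontrivial_field_action actK ->
  forall P : smod actK -> Prop,
    (exists M, P M /\ nonzero_smod M) ->
    closed_products P -> closed_subquotients P ->
    sequiv (@all_smod G K actK) P.
Proof.
move=> _ UB FA SM NT P [M [PM [m m0]]] CP CS.
have PV : forall V, P V.
  move=> V; apply: (CS _ _ _ (V_subquotient FA SM NT UB m0 V)).
  apply: (CP _ (fun _ => M) _ (Xproj FA SM M)) => //.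
  exact: (Xmod_is_product FA SM NT UB).
pose F := @SFunctor G K actK (@all_smod G K actK) P
  (fun X => exist P (proj1_sig X) (PV _)) (fun X Y f => f)
  (fun X => fun x => erefl) (fun X Y Z f g => fun x => erefl).
pose H := @SFunctor G K actK P (@all_smod G K actK)
  (fun X => exist (@all_smod G K actK) (proj1_sig X) Logic.I) (fun X Y f => f)
  (fun X => fun x => erefl) (fun X Y Z f g => fun x => erefl).
exists F, H, (fun X => sid _), (fun X => sid _), (fun Y => sid _), (fun Y => sid _).
by split.
Qed.
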